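(* For every integer $k\ge 2$, \[\overline{\alpha}(\{1,k,k+1\})=\begin{cases}\frac{2k}{6k+3} & k\equiv 0\pmod 3,\\ \frac13 & k\equiv 1\pmod 3,\\ \frac{k+1}{3k+6} & k\equiv 2\pmod 3.\end{cases}\]
   Context: For a finite set $S$ of positive integers, the distance graph $G(S)$ has vertex set $\mathbb{Z}$, with $i,j$ adjacent iff $|i-j|\in S$. The density of $A\subseteq\mathbb{Z}$ is $\delta(A)=\limsup_{N\to\infty}\frac{|A\cap[-N,N]|}{2N+1}$, and the independence ratio $\overline{\alpha}(S)$ is the supremum of $\delta(A)$ over independent sets $A$ of $G(S)$. *)

(* Defs.v *)
From Stdlib Require Import Reals ZArith List Lia.
From Coquelicot Require Import Coquelicot.
Open Scope R_scope.

(* A subset of Z, given by its characteristic function (classically every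
   subset of Z has one). *)
Definition zset := Z -> bool.

Definition count_in (A : zset) (N : nat) : nat :=
  length (filter A (map (fun i : nat => (Z.of_nat i - Z.of_nat N)%Z)
                        (seq 0 (2 * N + 1)))).

Definition density (A : zset) : Rbar :=
  LimSup_seq (fun N => INR (count_in A N) / INR (2 * N + 1)).

Definition independent (S : list Z) (A : zset) : Prop :=
  forall i j : Z, A i = true -> A j = true -> ~ In (Z.abs (i - j)) S.

Definition is_independence_ratio (S : list Z) (r : R) : Prop :=
  Rbar_is_lub (fun x : Rbar => exists A, independent S A /\ density A = x)
              (Finite r).

(* Main.v *)
Require Import Defs.
From Stdlib Require Import Reals ZArith List Lia Lra.
From Coquelicot Require Import Coquelicot.
Open Scope Z_scope.

Open Scope Z_scope.

Fixpoint cnt (f : Z -> bool) (s : Z) (n : nat) : nat :=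
  match n with
  | O => O
  | S n' => (cnt f s n' + (if f (s + Z.of_nat n')%Z then 1 else 0))%nat
  end.

Lemma cnt_add f s n m : cnt f s (n + m) = (cnt f s n + cnt f (s + Z.of_nat n) m)%nat.
Proof.
  induction m as [|m IH]; simpl.
  - rewrite Nat.add_0_r. lia.
  - rewrite Nat.add_succ_r. simpl. rewrite IH.
    replace (s + Z.of_nat (n + m)) with (s + Z.of_nat n + Z.of_nat m) by lia. lia.
Qed.

Lemma cnt_le f s n : (cnt f s n <= n)%nat.
Proof. induction n; simpl; [lia|]. destruct (f _); lia. Qed.

Lemma cnt_ext f g s n : (forall i, s <= i < s + Z.of_nat n -> f i = g i) -> cnt f s n = cnt g s n.
Proof.
  induction n as [|n IH]; intros H; simpl; auto.
  rewrite IH by (intros; apply H; lia). rewrite H by lia. reflexivity.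
Qed.

Definition cntZ f a b := cnt f a (Z.to_nat (b - a)).

Lemma cntZ_split f a b c : a <= b <= c -> cntZ f a c = (cntZ f a b + cntZ f b c)%nat.
Proof.
  intros H. unfold cntZ.
  replace (Z.to_nat (c - a)) with (Z.to_nat (b - a) + Z.to_nat (c - b))%nat by lia.
  rewrite cnt_add. f_equal. f_equal. lia.
Qed.

Lemma cntZ_nil f a b : b <= a -> cntZ f a b = 0%nat.
Proof. intros. unfold cntZ. replace (Z.to_nat (b - a)) with 0%nat by lia. reflexivity. Qed.

Lemma cntZ_one f a : cntZ f a (a+1) = if f a then 1%nat else 0%nat.
Proof. unfold cntZ. replace (Z.to_nat (a + 1 - a)) with 1%nat by lia. simpl. rewrite Z.add_0_r. destruct (f a); reflexivity. Qed.

Lemma cntZ_le f a b : a <= b -> Z.of_nat (cntZ f a b) <= b - a.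
Proof. intros. unfold cntZ. pose proof (cnt_le f a (Z.to_nat (b-a))). lia. Qed.

Lemma cntZ_mono f a b a' b' : a' <= a -> a <= b -> b <= b' -> (cntZ f a b <= cntZ f a' b')%nat.
Proof.
  intros. rewrite (cntZ_split f a' a b') by lia. rewrite (cntZ_split f a b b') by lia. lia.
Qed.

Lemma cntZ_zero f a b : (forall i, a <= i < b -> f i = false) -> cntZ f a b = 0%nat.
Proof.
  intros H. unfold cntZ. remember (Z.to_nat (b - a)) as n.
  assert (H' : forall i, a <= i < a + Z.of_nat n -> f i = false) by (intros; apply H; lia).
  clear H Heqn. induction n; simpl; auto.
  rewrite IHn by (intros; apply H'; lia). rewrite H' by lia. reflexivity.
Qed.

Lemma cntZ_ext f g a b : (forall i, a <= i < b -> f i = g i) -> cntZ f a b = cntZ g a b.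
Proof. intros H. unfold cntZ. apply cnt_ext. intros; apply H; lia. Qed.

Lemma filter_len_cnt (A : Z -> bool) c n :
  length (filter A (map (fun i : nat => Z.of_nat i + c) (seq 0 n))) = cnt A c n.
Proof.
  induction n as [|n IH]; [reflexivity|].
  rewrite seq_S, map_app, filter_app, length_app, IH. cbn [cnt map filter length].
  replace (c + Z.of_nat n) with (Z.of_nat n + c) by lia.
  rewrite ?Nat.add_0_l. destruct (A (Z.of_nat n + c)); simpl; lia.
Qed.

Lemma count_in_cntZ A N : count_in A N = cntZ A (- Z.of_nat N) (Z.of_nat N + 1).
Proof.
  unfold count_in, cntZ.
  replace (Z.to_nat (Z.of_nat N + 1 - - Z.of_nat N)) with (2 * N + 1)%nat by lia.
  rewrite <- filter_len_cnt. f_equal.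
Qed.

Open Scope Z_scope.

Definition PS (h : Z -> bool) := forall x, h x = true -> h (x+1) = false /\ h (x+2) = false.

Lemma cntZ_one' f a b : b = a + 1 -> cntZ f a b = if f a then 1%nat else 0%nat.
Proof. intros ->. apply cntZ_one. Qed.

Lemma cntZ_3 f a : cntZ f a (a+3) =
  ((if f a then 1 else 0) + (if f (a+1)%Z then 1 else 0) + (if f (a+2)%Z then 1 else 0))%nat.
Proof.
  rewrite (cntZ_split f a (a+1) (a+3)) by lia.
  rewrite (cntZ_split f (a+1) (a+2) (a+3)) by lia.
  rewrite (cntZ_one' f a (a+1)), (cntZ_one' f (a+1) (a+2)), (cntZ_one' f (a+2) (a+3)) by lia.
  lia.
Qed.

Lemma ps3 h a : PS h -> (cntZ h a (a+3) <= 1)%nat.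
Proof.
  intros H. rewrite cntZ_3.
  destruct (h a) eqn:E0.
  - destruct (H a E0) as [E1 E2]. rewrite E1, E2. lia.
  - destruct (h (a+1)) eqn:E1.
    + destruct (H (a+1) E1) as [E2 _]. replace (a+1+1) with (a+2) in E2 by lia. rewrite E2. lia.
    + destruct (h (a+2)); lia.
Qed.

Lemma ps_blocks h a n : PS h -> (cntZ h a (a + 3 * Z.of_nat n) <= n)%nat.
Proof.
  intros H. induction n as [|n IH].
  - rewrite cntZ_nil by lia. lia.
  - rewrite (cntZ_split h a (a + 3 * Z.of_nat n) (a + 3 * Z.of_nat (S n))) by lia.
    replace (a + 3 * Z.of_nat (S n)) with (a + 3 * Z.of_nat n + 3) by lia.
    pose proof (ps3 h (a + 3 * Z.of_nat n) H). lia.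
Qed.

Lemma ps_gen h a b : PS h -> a <= b -> 3 * Z.of_nat (cntZ h a b) <= b - a + 2.
Proof.
  intros H Hab.
  set (n := Z.to_nat ((b - a + 2) / 3)).
  assert (Hn : b <= a + 3 * Z.of_nat n /\ 3 * Z.of_nat n <= b - a + 2)
    by (unfold n; Z.div_mod_to_equations; lia).
  pose proof (cntZ_mono h a b a (a + 3 * Z.of_nat n) ltac:(lia) ltac:(lia) ltac:(lia)).
  pose proof (ps_blocks h a n H). lia.
Qed.

Open Scope Z_scope.

Lemma EvL h : PS h -> forall n a, (forall i, a <= i < a + Z.of_nat n -> h i = true -> i mod 2 = 0) ->
  4 * Z.of_nat (cntZ h a (a + Z.of_nat n)) <= Z.of_nat n + 3.
Proof.
  intros H n. induction n as [n IH] using lt_wf_ind. intros a Ha.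
  destruct n as [|n].
  - rewrite cntZ_nil by lia. lia.
  - rewrite (cntZ_split h a (a+1) (a + Z.of_nat (S n))) by lia.
    rewrite cntZ_one.
    destruct (h a) eqn:E.
    + assert (Hev : a mod 2 = 0) by (apply Ha; [lia|exact E]).
      destruct (H a E) as [E1 E2].
      destruct (Nat.le_gt_cases n 3) as [Hn|Hn].
      * rewrite cntZ_zero. { lia. }
        intros i Hi. assert (i = a+1 \/ i = a+2 \/ i = a+3) as [E'|[E'|E']] by lia; subst i; auto.
        destruct (h (a+3)) eqn:E3; auto. exfalso.
        specialize (Ha (a+3) ltac:(lia) E3). revert Ha Hev. clear. intros. Z.div_mod_to_equations. lia.
      * rewrite (cntZ_split h (a+1) (a+4) (a + Z.of_nat (S n))) by lia.
        rewrite (cntZ_zero h (a+1) (a+4)).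
        2:{ intros i Hi. assert (i = a+1 \/ i = a+2 \/ i = a+3) as [E'|[E'|E']] by lia; subst i; auto.
            destruct (h (a+3)) eqn:E3; auto. exfalso.
            specialize (Ha (a+3) ltac:(lia) E3). revert Ha Hev. clear. intros. Z.div_mod_to_equations. lia. }
        specialize (IH (n - 3)%nat ltac:(lia) (a+4)).
        replace (a + 4 + Z.of_nat (n - 3)) with (a + Z.of_nat (S n)) in IH by lia.
        assert (IH' := IH ltac:(intros i Hi; apply Ha; lia)). lia.
    + specialize (IH n ltac:(lia) (a+1)).
      replace (a + 1 + Z.of_nat n) with (a + Z.of_nat (S n)) in IH by lia.
      assert (IH' := IH ltac:(intros i Hi; apply Ha; lia)). lia.
Qed.

Lemma EvL' h a b : PS h -> a <= b -> (forall i, a <= i < b -> h i = true -> i mod 2 = 0) ->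
  4 * Z.of_nat (cntZ h a b) <= b - a + 3.
Proof.
  intros H Hab Ha. pose proof (EvL h H (Z.to_nat (b - a)) a).
  replace (a + Z.of_nat (Z.to_nat (b - a))) with b in H0 by lia.
  assert (H1 := H0 ltac:(intros i Hi; apply Ha; lia)). lia.
Qed.

Lemma LastOdd h : forall n s,
  (forall i, s <= i < s + Z.of_nat n -> h i = true -> i mod 2 = 0) \/
  exists j, s <= j < s + Z.of_nat n /\ h j = true /\ j mod 2 = 1 /\
    (forall i, j < i < s + Z.of_nat n -> h i = true -> i mod 2 = 0).
Proof.
  induction n as [|n IH]; intros s.
  - left. intros; lia.
  - destruct (h (s + Z.of_nat n)) eqn:E.
    + destruct (Z.eq_dec ((s + Z.of_nat n) mod 2) 1) as [Ho|Ho].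
      * right. exists (s + Z.of_nat n). repeat split; try lia; auto.
      * destruct (IH s) as [L|[j [Hj1 [Hj2 [Hj3 Hj4]]]]].
        -- left. intros i Hi Hh. destruct (Z.eq_dec i (s + Z.of_nat n)) as [->|Hne].
           ++ Z.div_mod_to_equations. lia.
           ++ apply L; auto; lia.
        -- right. exists j. repeat split; auto; try lia.
           intros i Hi Hh. destruct (Z.eq_dec i (s + Z.of_nat n)) as [->|Hne].
           ++ Z.div_mod_to_equations. lia.
           ++ apply Hj4; auto; lia.
    + destruct (IH s) as [L|[j [Hj1 [Hj2 [Hj3 Hj4]]]]].
      * left. intros i Hi Hh. destruct (Z.eq_dec i (s + Z.of_nat n)) as [->|Hne].
        -- congruence.
        -- apply L; auto; lia.
      * right. exists j. repeat split; auto; try lia.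
        intros i Hi Hh. destruct (Z.eq_dec i (s + Z.of_nat n)) as [->|Hne].
        -- congruence.
        -- apply Hj4; auto; lia.
Qed.

Lemma LastOdd' h s t : s <= t ->
  (forall i, s <= i < t -> h i = true -> i mod 2 = 0) \/
  exists j, s <= j < t /\ h j = true /\ j mod 2 = 1 /\
    (forall i, j < i < t -> h i = true -> i mod 2 = 0).
Proof.
  intros Hst. destruct (LastOdd h (Z.to_nat (t - s)) s) as [L|[j Hj]].
  - left. intros i Hi. apply L. lia.
  - right. exists j. replace (s + Z.of_nat (Z.to_nat (t - s))) with t in Hj by lia. exact Hj.
Qed.

Open Scope Z_scope.

Section Chain.
Variable h : Z -> bool.
Variable q : Z.
Hypothesis Hq : 1 <= q.
Hypothesis Hps : PS h.
Hypothesis HKodd : (3*q+2) mod 2 = 1.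
Hypothesis Hpair : forall j, j mod 2 = 1 -> h j = true -> h (j - (3*q+2)) = true.

Lemma block_bound j : h j = true -> Z.of_nat (cntZ h (j - (3*q+2)) (j+1)) <= q + 1.
Proof.
  intros _. pose proof (ps_gen h (j - (3*q+2)) (j+1) Hps ltac:(lia)). lia.
Qed.

Lemma tail_bound j t : h j = true -> j < t ->
  (forall i, j < i < t -> h i = true -> i mod 2 = 0) ->
  4 * Z.of_nat (cntZ h (j+1) t) <= t - j.
Proof.
  intros Hj Hjt Hev. destruct (Hps j Hj) as [E1 E2].
  destruct (Z_le_gt_dec t (j+3)) as [Hs|Hs].
  - rewrite cntZ_zero. lia. intros i Hi. assert (i = j+1 \/ i = j+2) as [E|E] by lia; subst i; auto.
  - rewrite (cntZ_split h (j+1) (j+3) t) by lia.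
    rewrite (cntZ_zero h (j+1) (j+3)).
    2:{ intros i Hi. assert (i = j+1 \/ i = j+2) as [E|E] by lia; subst i; auto. }
    pose proof (EvL' h (j+3) t Hps ltac:(lia) ltac:(intros; apply Hev; auto; lia)). lia.
Qed.

Lemma CL : forall m : nat, forall s t, t - s <= Z.of_nat m -> s <= t -> h t = true -> t mod 2 = 0 ->
  (3*q+5) * Z.of_nat (cntZ h s t) <= (q+1) * (t - s) + (q+1)*(3*q+5).
Proof.
  induction m as [|m IH]; intros s t Hm Hst Ht Hte.
  - rewrite cntZ_nil by lia. nia.
  - destruct (LastOdd' h s t Hst) as [L|[j [Hj1 [Hj2 [Hj3 Hj4]]]]].
    + pose proof (EvL' h s (t+1) Hps ltac:(lia)
        ltac:(intros i Hi Hh; destruct (Z.eq_dec i t); [subst; auto| apply L; auto; lia])).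
      rewrite (cntZ_split h s t (t+1)) in H by lia. rewrite cntZ_one, Ht in H.
      set (c := Z.of_nat (cntZ h s t)) in *. assert (4 * c <= t - s) by lia.
      assert (0 <= c) by lia. nia.
    + (* j odd hit; t even hit, so t >= j+3 *)
      assert (Hjt : j + 3 <= t).
      { destruct (Hps j Hj2) as [E1 E2].
        assert (t <> j+1) by (intro; subst; congruence).
        assert (t <> j+2) by (intro; subst; Z.div_mod_to_equations; lia).
        lia. }
      assert (Ee : cntZ h (j+1) t = cntZ h (j+3) t).
      { destruct (Hps j Hj2) as [E1 E2].
        rewrite (cntZ_split h (j+1) (j+3) t) by lia. rewrite (cntZ_zero h (j+1) (j+3)). reflexivity.
        intros i Hi. assert (i = j+1 \/ i = j+2) as [E|E] by lia; subst i; auto. }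
      pose proof (EvL' h (j+3) (t+1) Hps ltac:(lia)
            ltac:(intros i Hi Hh; destruct (Z.eq_dec i t); [subst; auto| apply Hj4; auto; lia])) as X.
      rewrite (cntZ_split h (j+3) t (t+1)) in X by lia. rewrite cntZ_one, Ht in X.
      rewrite <- Ee in X.
      set (e := Z.of_nat (cntZ h (j+1) t)) in *.
      assert (He : (3*q+5) * e <= (q+1) * (t - j - 3)).
      { assert (4 * e <= t - j - 3) by lia. assert (0 <= e) by lia. nia. }
      destruct (Z_le_gt_dec s (j - (3*q+2))) as [Hs|Hs].
      *
        assert (Hodd : (j - (3*q+2)) mod 2 = 0) by (clear -Hj3 HKodd; Z.div_mod_to_equations; lia).
        pose proof (IH s (j - (3*q+2)) ltac:(lia) Hs (Hpair j Hj3 Hj2) Hodd) as I1.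
        pose proof (block_bound j Hj2) as B.
        rewrite (cntZ_split h s (j - (3*q+2)) t) by lia.
        rewrite (cntZ_split h (j - (3*q+2)) (j+1) t) by lia.
        fold e. set (c1 := Z.of_nat (cntZ h s (j - (3 * q + 2)))) in *.
        set (c2 := Z.of_nat (cntZ h (j - (3 * q + 2)) (j + 1))) in *.
        rewrite !Nat2Z.inj_add. fold c1 c2 e.
        assert (0 <= c2) by lia. nia.
      * pose proof (block_bound j Hj2) as B.
        pose proof (cntZ_mono h s (j+1) (j - (3*q+2)) (j+1) ltac:(lia) ltac:(lia) ltac:(lia)) as M.
        rewrite (cntZ_split h s (j+1) t) by lia.
        rewrite Nat2Z.inj_add. fold e.
        set (c1 := Z.of_nat (cntZ h s (j+1))) in *.
        assert (c1 <= q+1) by lia. assert (0 <= c1) by lia. nia.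
Qed.

Lemma GW s t : s <= t ->
  (3*q+5) * Z.of_nat (cntZ h s t) <= (q+1) * (t - s + 3) + (q+1)*(3*q+5).
Proof.
  intros Hst.
  destruct (LastOdd' h s t Hst) as [L|[j [Hj1 [Hj2 [Hj3 Hj4]]]]].
  - pose proof (EvL' h s t Hps Hst L). set (c := Z.of_nat (cntZ h s t)) in *.
    assert (0 <= c) by lia. nia.
  - assert (Te : 4 * Z.of_nat (cntZ h (j+1) t) <= t - j).
    { destruct (Hps j Hj2) as [E1 E2].
      destruct (Z_le_gt_dec t (j+3)) as [Hs|Hs].
      - rewrite cntZ_zero. lia. intros i Hi. assert (i = j+1 \/ i = j+2) as [E|E] by lia; subst i; auto.
      - rewrite (cntZ_split h (j+1) (j+3) t) by lia.
        rewrite (cntZ_zero h (j+1) (j+3)).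
        2:{ intros i Hi. assert (i = j+1 \/ i = j+2) as [E|E] by lia; subst i; auto. }
        pose proof (EvL' h (j+3) t Hps ltac:(lia) ltac:(intros; apply Hj4; auto; lia)). lia. }
    set (e := Z.of_nat (cntZ h (j+1) t)) in *.
    assert (He : (3*q+5) * e <= (q+1) * (t - j)).
    { assert (0 <= e) by lia. nia. }
    destruct (Z_le_gt_dec s (j - (3*q+2))) as [Hs|Hs].
    + assert (Hodd : (j - (3*q+2)) mod 2 = 0) by (clear -Hj3 HKodd; Z.div_mod_to_equations; lia).
      pose proof (CL (Z.to_nat (j - (3*q+2) - s)) s (j - (3*q+2)) ltac:(lia) Hs (Hpair j Hj3 Hj2) Hodd) as I1.
      pose proof (block_bound j Hj2) as B.
      rewrite (cntZ_split h s (j - (3*q+2)) t) by lia.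
      rewrite (cntZ_split h (j - (3*q+2)) (j+1) t) by lia.
      set (c1 := Z.of_nat (cntZ h s (j - (3 * q + 2)))) in *.
      set (c2 := Z.of_nat (cntZ h (j - (3 * q + 2)) (j + 1))) in *.
      rewrite !Nat2Z.inj_add. fold c1 c2 e.
      assert (0 <= c2) by lia. nia.
    + pose proof (block_bound j Hj2) as B.
      pose proof (cntZ_mono h s (j+1) (j - (3*q+2)) (j+1) ltac:(lia) ltac:(lia) ltac:(lia)) as M.
      rewrite (cntZ_split h s (j+1) t) by lia.
      rewrite Nat2Z.inj_add. fold e.
      set (c1 := Z.of_nat (cntZ h s (j+1))) in *.
      assert (c1 <= q+1) by lia. assert (0 <= c1) by lia. nia.
Qed.
End Chain.

Section Zero.
Variable h : Z -> bool.
Variable q : Z.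
Hypothesis Hq : 1 <= q.
Hypothesis Hps : PS h.
Hypothesis Hnb : forall x, h x = true -> h (x + 3*q) = false.

Lemma B0 a : Z.of_nat (cntZ h a (a + 3*q + 1)) <= q.
Proof.
  pose proof (ps_blocks h a (Z.to_nat q) Hps) as P1.
  pose proof (ps_blocks h (a+1) (Z.to_nat q) Hps) as P2.
  rewrite Z2Nat.id in P1, P2 by lia.
  destruct (h a) eqn:E.
  - rewrite (cntZ_split h a (a + 3*q) (a+3*q+1)) by lia.
    rewrite (cntZ_one' h (a+3*q) (a+3*q+1)) by lia. rewrite Hnb by auto. lia.
  - rewrite (cntZ_split h a (a+1) (a+3*q+1)) by lia.
    rewrite cntZ_one, E. replace (a + 3*q + 1) with (a + 1 + 3*q) by lia. lia.
Qed.

Lemma GW0 : forall m : nat, forall s t, t - s <= Z.of_nat m -> s <= t ->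
  (3*q+1) * Z.of_nat (cntZ h s t) <= q * (t - s) + q * (3*q+1).
Proof.
  induction m as [|m IH]; intros s t Hm Hst.
  - rewrite cntZ_nil by lia. nia.
  - destruct (Z_le_gt_dec (t - s) (3*q+1)) as [Hs|Hs].
    + pose proof (cntZ_mono h s t s (s + 3*q + 1) ltac:(lia) ltac:(lia) ltac:(lia)).
      pose proof (B0 s). set (c := Z.of_nat (cntZ h s t)) in *. assert (c <= q) by lia.
      assert (0 <= c) by lia. nia.
    + rewrite (cntZ_split h s (s + 3*q + 1) t) by lia.
      pose proof (B0 s). pose proof (IH (s + 3*q+1) t ltac:(lia) ltac:(lia)).
      rewrite Nat2Z.inj_add. nia.
Qed.
End Zero.


Open Scope Z_scope.

Definition S3 (k : Z) := 1 :: k :: (k+1) :: nil.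


Lemma indep_use k A x y : 0 <= k -> independent (S3 k) A -> A x = true -> A y = true ->
  (y - x = 1 \/ y - x = k \/ y - x = k+1) -> False.
Proof.
  intros Hk H Hx Hy Hd. apply (H x y Hx Hy). replace (Z.abs (x - y)) with (y - x) by lia.
  simpl. destruct Hd as [E|[E|E]]; rewrite E; tauto.
Qed.

Lemma indep_intro k A : (forall x y, A x = true -> A y = true ->
  (y - x = 1 \/ y - x = k \/ y - x = k+1) -> False) -> independent (S3 k) A.
Proof.
  intros H i j Hi Hj HIn. simpl in HIn.
  destruct (Z_le_gt_dec i j).
  - apply (H i j Hi Hj). replace (Z.abs (i - j)) with (j - i) in HIn by lia. intuition.
  - apply (H j i Hj Hi). replace (Z.abs (i - j)) with (i - j) in HIn by lia. intuition.
Qed.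

Definition hz (A : Z -> bool) (k z : Z) : bool :=
  if z mod 2 =? 0 then A (z / 2 + k) else A (z / 2).

Lemma hz_even A k m : hz A k (2*m) = A (m + k).
Proof. unfold hz. replace ((2*m) mod 2) with 0 by (Z.div_mod_to_equations; lia).
  replace (2*m/2) with m by (Z.div_mod_to_equations; lia). reflexivity. Qed.

Lemma hz_odd A k m : hz A k (2*m+1) = A m.
Proof. unfold hz. replace ((2*m+1) mod 2) with 1 by (Z.div_mod_to_equations; lia).
  replace ((2*m+1)/2) with m by (Z.div_mod_to_equations; lia). reflexivity. Qed.

Lemma parity x : exists m, x = 2*m \/ x = 2*m+1.
Proof. exists (x / 2). Z.div_mod_to_equations; lia. Qed.

Lemma cnt_hz A k : forall n : nat, forall u,
  cntZ (hz A k) (2*u) (2*(u + Z.of_nat n)) =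
  (cntZ A u (u + Z.of_nat n) + cntZ A (u+k) (u + Z.of_nat n + k))%nat.
Proof.
  induction n as [|n IH]; intros u.
  - rewrite !cntZ_nil by lia. reflexivity.
  - rewrite (cntZ_split _ (2*u) (2*(u + Z.of_nat n)) (2*(u + Z.of_nat (S n)))) by lia.
    rewrite (cntZ_split _ u (u + Z.of_nat n) (u + Z.of_nat (S n))) by lia.
    rewrite (cntZ_split _ (u+k) (u + Z.of_nat n + k) (u + Z.of_nat (S n) + k)) by lia.
    rewrite IH.
    replace (2 * (u + Z.of_nat (S n))) with (2*(u + Z.of_nat n) + 1 + 1) by lia.
    rewrite (cntZ_split _ (2*(u + Z.of_nat n)) (2*(u + Z.of_nat n) + 1)) by lia.
    rewrite !cntZ_one.
    rewrite (cntZ_one' A (u + Z.of_nat n)) by lia.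
    rewrite (cntZ_one' A (u + Z.of_nat n + k)) by lia.
    rewrite hz_even, hz_odd.
    destruct (A (u + Z.of_nat n + k)), (A (u + Z.of_nat n)); lia.
Qed.

Lemma cnt_shift A k u v : 0 <= k -> u <= v ->
  Z.of_nat (cntZ A u v) <= Z.of_nat (cntZ A (u+k) (v+k)) + k.
Proof.
  intros Hk Huv. destruct (Z_le_gt_dec v (u+k)).
  - pose proof (cntZ_le A u v Huv). lia.
  - rewrite (cntZ_split A u (u+k) v) by lia.
    pose proof (cntZ_le A u (u+k) ltac:(lia)).
    pose proof (cntZ_mono A (u+k) v (u+k) (v+k) ltac:(lia) ltac:(lia) ltac:(lia)). lia.
Qed.

Lemma two_cnt A k u v : 0 <= k -> u <= v ->
  2 * Z.of_nat (cntZ A u v) <= Z.of_nat (cntZ (hz A k) (2*u) (2*v)) + k.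
Proof.
  intros Hk Huv. pose proof (cnt_hz A k (Z.to_nat (v - u)) u) as E.
  replace (u + Z.of_nat (Z.to_nat (v - u))) with v in E by lia.
  rewrite E. pose proof (cnt_shift A k u v Hk Huv). lia.
Qed.

Section Indep.
Variable A : Z -> bool.
Variable k : Z.
Hypothesis Hk : 2 <= k.
Hypothesis HA : independent (S3 k) A.

Lemma hz_PS : PS (hz A k).
Proof.
  intros x Hx. destruct (parity x) as [m [E0|E0]]; subst x.
  - rewrite hz_even in Hx. split.
    + rewrite hz_odd. destruct (A m) eqn:E; auto. exfalso.
      apply (indep_use k A m (m+k)); auto; lia.
    + replace (2*m+2) with (2*(m+1)) by lia. rewrite hz_even. destruct (A (m+1+k)) eqn:E; auto.
      exfalso. apply (indep_use k A (m+k) (m+1+k)); auto; lia.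
  - rewrite hz_odd in Hx. split.
    + replace (2*m+1+1) with (2*(m+1)) by lia. rewrite hz_even. destruct (A (m+1+k)) eqn:E; auto.
      exfalso. apply (indep_use k A m (m+1+k)); auto; lia.
    + replace (2*m+1+2) with (2*(m+1)+1) by lia. rewrite hz_odd. destruct (A (m+1)) eqn:E; auto.
      exfalso. apply (indep_use k A m (m+1)); auto; lia.
Qed.

Lemma hz_pair j : j mod 2 = 1 -> hz A k j = true -> hz A k (j - (2*k+1)) = true.
Proof.
  intros Hj H. destruct (parity j) as [m [E|E]]; subst j.
  - exfalso. Z.div_mod_to_equations; lia.
  - rewrite hz_odd in H. replace (2*m+1 - (2*k+1)) with (2*(m-k)) by lia.
    rewrite hz_even. replace (m - k + k) with m by lia. exact H.
Qed.

Lemma hz_nb x : hz A k x = true -> hz A k (x + 2*k) = false.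
Proof.
  intros H. destruct (parity x) as [m [E|E]]; subst x.
  - rewrite hz_even in H. replace (2*m + 2*k) with (2*(m+k)) by lia. rewrite hz_even.
    destruct (A (m+k+k)) eqn:E; auto. exfalso. apply (indep_use k A (m+k) (m+k+k)); auto; lia.
  - rewrite hz_odd in H. replace (2*m + 1 + 2*k) with (2*(m+k)+1) by lia. rewrite hz_odd.
    destruct (A (m+k)) eqn:E; auto. exfalso. apply (indep_use k A m (m+k)); auto; lia.
Qed.

Lemma cA_h N : 2 * Z.of_nat (count_in A N) <=
  Z.of_nat (cntZ (hz A k) (-2 * Z.of_nat N) (2 * Z.of_nat N + 2)) + k.
Proof.
  rewrite count_in_cntZ. pose proof (two_cnt A k (- Z.of_nat N) (Z.of_nat N + 1) ltac:(lia) ltac:(lia)).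
  replace (2 * - Z.of_nat N) with (-2 * Z.of_nat N) in H by lia.
  replace (2 * (Z.of_nat N + 1)) with (2 * Z.of_nat N + 2) in H by lia. exact H.
Qed.

Lemma upper1 m : k = 3*m+1 -> exists C, forall N,
  3 * Z.of_nat (count_in A N) <= 1 * (2 * Z.of_nat N + 1) + C.
Proof.
  intros Ekm. exists (2 + 3*k). intros N.
  pose proof (cA_h N). pose proof (ps_gen (hz A k) (-2 * Z.of_nat N) (2 * Z.of_nat N + 2) hz_PS ltac:(lia)).
  lia.
Qed.

Lemma upper2 m : k = 3*m+2 -> exists C, forall N,
  (3*m+4) * Z.of_nat (count_in A N) <= (m+1) * (2 * Z.of_nat N + 1) + C.
Proof.
  intros Ekm. exists ((m+1)*(6*m+11) + (3*m+4)*(3*m+2)). intros N.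
  pose proof (cA_h N).
  assert (Hq : 1 <= 2*m+1) by lia.
  assert (HK : (3*(2*m+1)+2) mod 2 = 1) by (Z.div_mod_to_equations; lia).
  assert (Hp : forall j, j mod 2 = 1 -> hz A k j = true -> hz A k (j - (3*(2*m+1)+2)) = true).
  { intros j Hj1 Hj2. replace (3*(2*m+1)+2) with (2*k+1) by lia. apply hz_pair; auto. }
  pose proof (GW (hz A k) (2*m+1) Hq hz_PS HK Hp (-2 * Z.of_nat N) (2 * Z.of_nat N + 2) ltac:(lia)) as G.
  set (ch := Z.of_nat (cntZ (hz A k) (-2 * Z.of_nat N) (2 * Z.of_nat N + 2))) in *.
  set (ca := Z.of_nat (count_in A N)) in *.
  set (n := Z.of_nat N) in *.
  assert (0 <= m) by lia.
  nia.
Qed.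

Lemma upper0 m : k = 3*m -> exists C, forall N,
  (6*m+1) * Z.of_nat (count_in A N) <= (2*m) * (2 * Z.of_nat N + 1) + C.
Proof.
  intros Ekm. exists (m*(6*m+1) + (6*m+1)*(3*m)). intros N.
  pose proof (cA_h N).
  assert (Hq : 1 <= 2*m) by lia.
  assert (Hnb : forall x, hz A k x = true -> hz A k (x + 3*(2*m)) = false).
  { intros x Hx. replace (3*(2*m)) with (2*k) by lia. apply hz_nb; auto. }
  pose proof (GW0 (hz A k) (2*m) Hq hz_PS Hnb (Z.to_nat (4 * Z.of_nat N + 2))
     (-2 * Z.of_nat N) (2 * Z.of_nat N + 2) ltac:(lia) ltac:(lia)) as G.
  set (ch := Z.of_nat (cntZ (hz A k) (-2 * Z.of_nat N) (2 * Z.of_nat N + 2))) in *.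
  set (ca := Z.of_nat (count_in A N)) in *.
  set (n := Z.of_nat N) in *.
  assert (0 <= m) by lia.
  nia.
Qed.
End Indep.

Open Scope Z_scope.

Section Per.
Variable A : Z -> bool.
Variable p : Z.
Hypothesis Hp : 0 < p.
Hypothesis Hper : forall x, A (x + p) = A x.

Lemma per_shift1 s : cntZ A (s+1) (s+1+p) = cntZ A s (s+p).
Proof.
  pose proof (cntZ_split A s (s+1) (s+1+p) ltac:(lia)) as E1.
  pose proof (cntZ_split A s (s+p) (s+1+p) ltac:(lia)) as E2.
  rewrite cntZ_one in E1. rewrite (cntZ_one' A (s+p) (s+1+p)) in E2 by lia.
  rewrite Hper in E2. lia.
Qed.

Lemma per_all s : cntZ A s (s+p) = cntZ A 0 (0+p).
Proof.
  destruct (Z_le_gt_dec 0 s).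
  - replace s with (Z.of_nat (Z.to_nat s)) by lia. induction (Z.to_nat s) as [|n IH]; auto.
    rewrite Nat2Z.inj_succ, <- Z.add_1_r, per_shift1. exact IH.
  - replace s with (- Z.of_nat (Z.to_nat (-s))) by lia. induction (Z.to_nat (-s)) as [|n IH]; auto.
    rewrite <- IH. rewrite Nat2Z.inj_succ.
    pose proof (per_shift1 (- Z.succ (Z.of_nat n))).
    replace (- Z.succ (Z.of_nat n) + 1) with (- Z.of_nat n) in H by lia. rewrite H. reflexivity.
Qed.

Lemma per_lower : forall m : nat, forall s t, t - s <= Z.of_nat m -> s <= t ->
  p * Z.of_nat (cntZ A s t) >= Z.of_nat (cntZ A 0 (0+p)) * (t - s) - Z.of_nat (cntZ A 0 (0+p)) * p.
Proof.
  set (c := Z.of_nat (cntZ A 0 (0+p))).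
  assert (Hc0 : 0 <= c) by (unfold c; lia).
  assert (Hcp : c <= p) by (unfold c; pose proof (cntZ_le A 0 (0+p)); lia).
  induction m as [|m IH]; intros s t Hm Hst.
  - rewrite cntZ_nil by lia. nia.
  - destruct (Z_le_gt_dec p (t - s)) as [Hs|Hs].
    + rewrite (cntZ_split A s (s+p) t) by lia. rewrite per_all. fold c.
      pose proof (IH (s+p) t ltac:(lia) ltac:(lia)). rewrite Nat2Z.inj_add. fold c. nia.
    + assert (0 <= Z.of_nat (cntZ A s t)) by lia. nia.
Qed.

Lemma per_count N : p * Z.of_nat (count_in A N) >=
  Z.of_nat (cntZ A 0 (0+p)) * (2 * Z.of_nat N + 1) - Z.of_nat (cntZ A 0 (0+p)) * p.
Proof.
  rewrite count_in_cntZ.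
  pose proof (per_lower (2*N+1) (- Z.of_nat N) (Z.of_nat N + 1) ltac:(lia) ltac:(lia)).
  replace (Z.of_nat N + 1 - - Z.of_nat N) with (2 * Z.of_nat N + 1) in H by lia. exact H.
Qed.
End Per.

Lemma m3 c a : 0 <= c < 3 -> a mod 3 = 0 -> forall n : nat,
  cntZ (fun x => x mod 3 =? c) a (a + 3 * Z.of_nat n) = n.
Proof.
  intros Hc Ha n. induction n as [|n IH].
  - apply cntZ_nil. lia.
  - rewrite (cntZ_split _ a (a + 3 * Z.of_nat n) (a + 3 * Z.of_nat (S n))) by lia.
    rewrite IH. replace (a + 3 * Z.of_nat (S n)) with (a + 3 * Z.of_nat n + 3) by lia.
    rewrite cntZ_3.
    replace ((a + 3 * Z.of_nat n) mod 3) with 0 by (Z.div_mod_to_equations; lia).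
    replace ((a + 3 * Z.of_nat n + 1) mod 3) with 1 by (Z.div_mod_to_equations; lia).
    replace ((a + 3 * Z.of_nat n + 2) mod 3) with 2 by (Z.div_mod_to_equations; lia).
    assert (c = 0 \/ c = 1 \/ c = 2) as [E|[E|E]] by lia; subst c; simpl; lia.
Qed.

Lemma mod_step p x d : 0 < d < p -> ((x + d) mod p = x mod p + d \/ (x + d) mod p = x mod p + d - p).
Proof.
  intros Hd. pose proof (Z.mod_pos_bound x p ltac:(lia)).
  rewrite <- Z.add_mod_idemp_l by lia.
  destruct (Z_lt_le_dec (x mod p + d) p).
  - left. apply Z.mod_small. lia.
  - right. transitivity ((x mod p + d - p + 1*p) mod p). { f_equal; lia. }
    rewrite Z.mod_add by lia. apply Z.mod_small. lia.
Qed.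

Definition A1 (x : Z) : bool := x mod 3 =? 0.

Lemma A1_indep m : independent (S3 (3*m+1)) A1.
Proof.
  apply indep_intro. intros x y Hx Hy Hd. unfold A1 in *.
  apply Z.eqb_eq in Hx, Hy. Z.div_mod_to_equations. lia.
Qed.

Lemma A1_per x : A1 (x + 3) = A1 x.
Proof. unfold A1. replace (x+3) with (x + 1*3) by lia. rewrite Z.mod_add by lia. reflexivity. Qed.

Lemma A1_cnt : cntZ A1 0 (0+3) = 1%nat.
Proof. reflexivity. Qed.

Definition A2 (m x : Z) : bool := let r := x mod (3*m+4) in (r mod 3 =? 0) && (r <? 3*m+3).

Lemma A2_indep m : 0 <= m -> independent (S3 (3*m+2)) (A2 m).
Proof.
  intros Hm. apply indep_intro. intros x y Hx Hy Hd. unfold A2 in *.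
  apply andb_prop in Hx, Hy. destruct Hx as [Hx1 Hx2], Hy as [Hy1 Hy2].
  apply Z.eqb_eq in Hx1, Hy1. apply Z.ltb_lt in Hx2, Hy2.
  pose proof (Z.mod_pos_bound x (3*m+4) ltac:(lia)).
  pose proof (Z.mod_pos_bound y (3*m+4) ltac:(lia)).
  assert (Ey : y = x + (y - x)) by lia.
  destruct (mod_step (3*m+4) x (y - x) ltac:(lia)) as [E|E]; rewrite <- Ey in E;
  set (rx := x mod (3*m+4)) in *; set (ry := y mod (3*m+4)) in *;
  clearbody rx ry; Z.div_mod_to_equations; lia.
Qed.

Lemma A2_per m x : 0 <= m -> A2 m (x + (3*m+4)) = A2 m x.
Proof. intros. unfold A2. replace (x + (3*m+4)) with (x + 1*(3*m+4)) by lia. rewrite Z.mod_add by lia. reflexivity. Qed.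

Lemma A2_cnt m : 0 <= m -> cntZ (A2 m) 0 (0 + (3*m+4)) = Z.to_nat (m+1).
Proof.
  intros Hm.
  rewrite (cntZ_ext (A2 m) (fun x => andb (x mod 3 =? 0) (x <? 3*m+3))).
  2:{ intros i Hi. unfold A2. rewrite (Z.mod_small i (3*m+4)) by lia. reflexivity. }
  rewrite (cntZ_split _ 0 (3*m+3) (0 + (3*m+4))) by lia.
  rewrite (cntZ_one' _ (3*m+3)) by lia.
  replace ((3*m+3) <? 3*m+3) with false by (symmetry; apply Z.ltb_ge; lia).
  rewrite Bool.andb_false_r.
  rewrite (cntZ_ext _ (fun x => x mod 3 =? 0)).
  2:{ intros i Hi. replace (i <? 3*m+3) with true by (symmetry; apply Z.ltb_lt; lia). apply Bool.andb_true_r. }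
  pose proof (m3 0 0 ltac:(lia) ltac:(reflexivity) (Z.to_nat (m+1))) as E.
  replace (0 + 3 * Z.of_nat (Z.to_nat (m+1))) with (3*m+3) in E by lia. rewrite E. lia.
Qed.

Definition A0 (m x : Z) : bool := let r := x mod (6*m+1) in
  ((r <? 3*m) && (r mod 3 =? 0)) || ((3*m <=? r) && (r <? 6*m) && (r mod 3 =? 2)).

Lemma A0_indep m : 1 <= m -> independent (S3 (3*m)) (A0 m).
Proof.
  intros Hm. apply indep_intro. intros x y Hx Hy Hd. unfold A0 in *.
  pose proof (Z.mod_pos_bound x (6*m+1) ltac:(lia)).
  pose proof (Z.mod_pos_bound y (6*m+1) ltac:(lia)).
  assert (Ey : y = x + (y - x)) by lia.
  destruct (mod_step (6*m+1) x (y - x) ltac:(lia)) as [E|E]; rewrite <- Ey in E;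
  set (rx := x mod (6*m+1)) in *; set (ry := y mod (6*m+1)) in *;
  clearbody rx ry;
  repeat match goal with
  | H : orb _ _ = true |- _ => apply Bool.orb_true_iff in H
  | H : andb _ _ = true |- _ => apply andb_prop in H
  | H : (_ =? _) = true |- _ => apply Z.eqb_eq in H
  | H : (_ <? _) = true |- _ => apply Z.ltb_lt in H
  | H : (_ <=? _) = true |- _ => apply Z.leb_le in H
  end; Z.div_mod_to_equations; lia.
Qed.

Lemma A0_per m x : 0 <= m -> A0 m (x + (6*m+1)) = A0 m x.
Proof. intros. unfold A0. replace (x + (6*m+1)) with (x + 1*(6*m+1)) by lia. rewrite Z.mod_add by lia. reflexivity. Qed.

Lemma A0_cnt m : 1 <= m -> cntZ (A0 m) 0 (0 + (6*m+1)) = Z.to_nat (2*m).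
Proof.
  intros Hm.
  rewrite (cntZ_split _ 0 (3*m) (0 + (6*m+1))) by lia.
  rewrite (cntZ_split _ (3*m) (6*m) (0 + (6*m+1))) by lia.
  rewrite (cntZ_one' _ (6*m)) by lia.
  unfold A0 at 3. rewrite (Z.mod_small (6*m) (6*m+1)) by lia.
  replace (6*m <? 3*m) with false by (symmetry; apply Z.ltb_ge; lia).
  replace (6*m <? 6*m) with false by (symmetry; apply Z.ltb_ge; lia).
  rewrite !Bool.andb_false_r. simpl orb.
  rewrite (cntZ_ext (A0 m) (fun x => x mod 3 =? 0) 0 (3*m)).
  2:{ intros i Hi. unfold A0. rewrite (Z.mod_small i (6*m+1)) by lia.
      replace (i <? 3*m) with true by (symmetry; apply Z.ltb_lt; lia).
      replace (3*m <=? i) with false by (symmetry; apply Z.leb_gt; lia). simpl.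
      rewrite Bool.orb_false_r. reflexivity. }
  rewrite (cntZ_ext (A0 m) (fun x => x mod 3 =? 2) (3*m) (6*m)).
  2:{ intros i Hi. unfold A0. rewrite (Z.mod_small i (6*m+1)) by lia.
      replace (i <? 3*m) with false by (symmetry; apply Z.ltb_ge; lia).
      replace (3*m <=? i) with true by (symmetry; apply Z.leb_le; lia).
      replace (i <? 6*m) with true by (symmetry; apply Z.ltb_lt; lia). simpl. reflexivity. }
  pose proof (m3 0 0 ltac:(lia) ltac:(reflexivity) (Z.to_nat m)) as E1.
  pose proof (m3 2 (3*m) ltac:(lia) ltac:(Z.div_mod_to_equations; lia) (Z.to_nat m)) as E2.
  replace (0 + 3 * Z.of_nat (Z.to_nat m)) with (3*m) in E1 by lia.
  replace (3*m + 3 * Z.of_nat (Z.to_nat m)) with (6*m) in E2 by lia.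
  rewrite E1, E2. lia.
Qed.

Open Scope R_scope.

Lemma lim_aux (r c : R) : is_lim_seq (fun N : nat => r + c * / INR (2*N+1)) r.
Proof.
  assert (H1 : is_lim_seq (fun N : nat => INR (2*N+1)) p_infty).
  { apply is_lim_seq_le_p_loc with INR; [|exact is_lim_seq_INR].
    exists 0%nat. intros n _. apply le_INR. lia. }
  assert (H2 := is_lim_seq_inv _ _ H1 ltac:(discriminate)). simpl in H2.
  assert (H3 := is_lim_seq_scal_l _ c _ H2). simpl in H3.
  assert (H4 := is_lim_seq_plus' _ _ r (c*0) (is_lim_seq_const r) H3).
  replace (r + c * 0) with r in H4 by ring. exact H4.
Qed.

Lemma limsup_le (u : nat -> R) r c : (forall N, u N <= r + c * / INR (2*N+1)) ->
  Rbar_le (LimSup_seq u) (Finite r).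
Proof.
  intros H. rewrite <- (is_LimSup_seq_unique _ _ (is_lim_LimSup_seq _ _ (lim_aux r c))).
  apply LimSup_le. exists 0%nat. intros n _. apply H.
Qed.

Lemma limsup_ge (u : nat -> R) r c : (forall N, r + c * / INR (2*N+1) <= u N) ->
  Rbar_le (Finite r) (LimSup_seq u).
Proof.
  intros H. rewrite <- (is_LimSup_seq_unique _ _ (is_lim_LimSup_seq _ _ (lim_aux r c))).
  apply LimSup_le. exists 0%nat. intros n _. apply H.
Qed.

Lemma dens_upper A (Nn D C : Z) : (0 < D)%Z ->
  (forall N, (D * Z.of_nat (count_in A N) <= Nn * (2 * Z.of_nat N + 1) + C)%Z) ->
  Rbar_le (density A) (Finite (IZR Nn / IZR D)).
Proof.
  intros HD H. unfold density. apply limsup_le with (c := IZR C / IZR D).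
  intros N. specialize (H N).
  assert (HL : 0 < INR (2*N+1)) by (apply lt_0_INR; lia).
  assert (HDr : 0 < IZR D) by (apply IZR_lt; exact HD).
  apply IZR_le in H. rewrite plus_IZR, !mult_IZR, plus_IZR, mult_IZR in H.
  rewrite <- !INR_IZR_INZ in H.
  replace (IZR 2 * INR N + IZR 1) with (INR (2*N+1)) in H
    by (rewrite plus_INR, mult_INR; simpl; ring).
  apply Rmult_le_reg_r with (IZR D * INR (2*N+1)). { apply Rmult_lt_0_compat; lra. }
  replace (INR (count_in A N) / INR (2 * N + 1) * (IZR D * INR (2 * N + 1)))
    with (IZR D * INR (count_in A N)) by (field; lra).
  replace ((IZR Nn / IZR D + IZR C / IZR D * / INR (2 * N + 1)) * (IZR D * INR (2 * N + 1)))
    with (IZR Nn * INR (2 * N + 1) + IZR C) by (field; lra).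
  exact H.
Qed.

Lemma dens_lower A (Nn D C : Z) : (0 < D)%Z ->
  (forall N, (D * Z.of_nat (count_in A N) >= Nn * (2 * Z.of_nat N + 1) - C)%Z) ->
  Rbar_le (Finite (IZR Nn / IZR D)) (density A).
Proof.
  intros HD H. unfold density. apply limsup_ge with (c := - IZR C / IZR D).
  intros N. specialize (H N).
  assert (HL : 0 < INR (2*N+1)) by (apply lt_0_INR; lia).
  assert (HDr : 0 < IZR D) by (apply IZR_lt; exact HD).
  apply Z.ge_le in H. apply IZR_le in H. rewrite minus_IZR, !mult_IZR, plus_IZR, mult_IZR in H.
  rewrite <- !INR_IZR_INZ in H.
  replace (IZR 2 * INR N + IZR 1) with (INR (2*N+1)) in H
    by (rewrite plus_INR, mult_INR; simpl; ring).
  apply Rmult_le_reg_r with (IZR D * INR (2*N+1)). { apply Rmult_lt_0_compat; lra. }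
  replace (INR (count_in A N) / INR (2 * N + 1) * (IZR D * INR (2 * N + 1)))
    with (IZR D * INR (count_in A N)) by (field; lra).
  replace ((IZR Nn / IZR D + - IZR C / IZR D * / INR (2 * N + 1)) * (IZR D * INR (2 * N + 1)))
    with (IZR Nn * INR (2 * N + 1) - IZR C) by (field; lra).
  exact H.
Qed.

Lemma ratio_from S (Nn D : Z) : (0 < D)%Z ->
  (forall A, independent S A -> exists C, forall N,
      (D * Z.of_nat (count_in A N) <= Nn * (2 * Z.of_nat N + 1) + C)%Z) ->
  (exists A0 C, independent S A0 /\ forall N,
      (D * Z.of_nat (count_in A0 N) >= Nn * (2 * Z.of_nat N + 1) - C)%Z) ->
  is_independence_ratio S (IZR Nn / IZR D).
Proof.
  intros HD Hup [A0 [C0 [HA0 Hlow]]]. split.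
  - intros x [A [HA <-]]. destruct (Hup A HA) as [C HC]. apply (dens_upper A Nn D C HD HC).
  - intros b Hb. apply Rbar_le_trans with (density A0).
    + apply (dens_lower A0 Nn D C0 HD Hlow).
    + apply Hb. exists A0. split; auto.
Qed.

Open Scope R_scope.

Theorem theorem35 (k : Z) (hk : (2 <= k)%Z) :
  is_independence_ratio (1%Z :: k :: (k + 1)%Z :: nil)
    (if Z.eqb (Z.modulo k 3) 0 then 2 * IZR k / (6 * IZR k + 3)
     else if Z.eqb (Z.modulo k 3) 1 then 1 / 3
     else (IZR k + 1) / (3 * IZR k + 6)).
Proof.
  change (1%Z :: k :: (k + 1)%Z :: nil) with (S3 k).
  destruct (Z.eqb_spec (k mod 3) 0) as [E0|E0].
  - set (m := (k / 3)%Z). assert (Ek : k = (3*m)%Z) by (unfold m; Z.div_mod_to_equations; lia).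
    assert (Hm : (1 <= m)%Z) by lia.
    replace (2 * IZR k / (6 * IZR k + 3)) with (IZR (2*m) / IZR (6*m+1)).
    2:{ rewrite Ek, !mult_IZR, plus_IZR, mult_IZR.
        assert (0 < IZR m) by (apply IZR_lt; lia). field. lra. }
    apply ratio_from; [lia| |].
    + intros A HA. apply (upper0 A k ltac:(lia) HA m Ek).
    + exists (A0 m), (2*m*(6*m+1))%Z. split.
      * rewrite Ek. apply A0_indep; lia.
      * intros N. pose proof (per_count (A0 m) (6*m+1) ltac:(lia) (fun x => A0_per m x ltac:(lia)) N) as P.
        rewrite A0_cnt in P by lia. rewrite Z2Nat.id in P by lia. exact P.
  - destruct (Z.eqb_spec (k mod 3) 1) as [E1|E1].
    + set (m := (k / 3)%Z). assert (Ek : k = (3*m+1)%Z) by (unfold m; Z.div_mod_to_equations; lia).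
      replace (1/3) with (IZR 1 / IZR 3) by reflexivity.
      apply ratio_from; [lia| |].
      * intros A HA. apply (upper1 A k ltac:(lia) HA m Ek).
      * exists A1, 3%Z. split.
        -- rewrite Ek. apply A1_indep.
        -- intros N. pose proof (per_count A1 3 ltac:(lia) A1_per N) as P.
           rewrite A1_cnt in P. simpl Z.of_nat in P. lia.
    + set (m := (k / 3)%Z). assert (Ek : k = (3*m+2)%Z) by (unfold m; Z.div_mod_to_equations; lia).
      assert (Hm : (0 <= m)%Z) by lia.
      replace ((IZR k + 1) / (3 * IZR k + 6)) with (IZR (m+1) / IZR (3*m+4)).
      2:{ rewrite Ek, !plus_IZR, !mult_IZR.
          assert (0 <= IZR m) by (apply IZR_le; lia). field. lra. }
      apply ratio_from; [lia| |].
      * intros A HA. apply (upper2 A k ltac:(lia) HA m Ek).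
      * exists (A2 m), ((m+1)*(3*m+4))%Z. split.
        -- rewrite Ek. apply A2_indep; lia.
        -- intros N. pose proof (per_count (A2 m) (3*m+4) ltac:(lia) (fun x => A2_per m x ltac:(lia)) N) as P.
           rewrite A2_cnt in P by lia. rewrite Z2Nat.id in P by lia. exact P.
Qed.
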